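(* Let $\{\mathcal G,(\Gamma_0,\Gamma_1),(\widetilde\Gamma_0,\widetilde\Gamma_1)\}$ be a triple for the adjoint pair $\{S,\widetilde S\}$ satisfying (G), (D), (M), and assume $\rho(A_0)\neq\emptyset$ (equivalently $\rho(\widetilde A_0)\neq\emptyset$). Let $\gamma,\widetilde\gamma$ be the $\gamma$-fields and $M,\widetilde M$ the Weyl functions. Then for all $\lambda\in\rho(A_0)$ and $\mu\in\rho(\widetilde A_0)$: (i) $M(\lambda)$ and $\widetilde M(\mu)$ are operators in $\mathcal G$ with dense domains $\operatorname{dom}M(\lambda)=\operatorname{ran}\Gamma_0$, $\operatorname{dom}\widetilde M(\mu)=\operatorname{ran}\widetilde\Gamma_0$, and $\operatorname{ran}M(\lambda)\subset\operatorname{ran}\Gamma_1$, $\operatorname{ran}\widetilde M(\mu)\subset\operatorname{ran}\widetilde\Gamma_1$; (ii) $M(\lambda)\subset\widetilde M(\overline\lambda)^*$ and $\widetilde M(\overline\lambda)\subset M(\lambda)^*$, and $M(\lambda)-\widetilde M(\mu)^*=(\lambda-\overline\mu)\widetilde\gamma(\mu)^*\gamma(\lambda)$, $M(\lambda)^*-\widetilde M(\mu)=(\overline\lambda-\mu)\gamma(\lambda)^*\widetilde\gamma(\mu)$; (iii) for fixed $\lambda_0,\mu_0\in\rho(A_0)\cap\rho(\widetilde A_0)$, $M(\lambda)=\widetilde M(\lambda_0)^*+\widetilde\gamma(\lambda_0)^*(\lambda-\overline{\lambda_0})(I+(\lambda-\lambda_0)(A_0-\lambda)^{-1})\gamma(\lambda_0)$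 and $\widetilde M(\mu)=M(\mu_0)^*+\gamma(\mu_0)^*(\mu-\overline{\mu_0})(I+(\mu-\mu_0)(\widetilde A_0-\mu)^{-1})\widetilde\gamma(\mu_0)$, i.e. $M$ and $\widetilde M$ are the sum of a fixed closed (possibly unbounded) operator and a bounded holomorphic operator function.
   Context: Let $\mathfrak H$ be a separable Hilbert space. An adjoint pair $\{S,\widetilde S\}$ consists of densely defined closed operators $S,\widetilde S$ in $\mathfrak H$ with $(Sf,g)=(f,\widetilde Sg)$ for all $f\in\operatorname{dom}S$, $g\in\operatorname{dom}\widetilde S$. Fix operators $T\subset S^*$ and $\widetilde T\subset\widetilde S^*$ which are cores, i.e. $\overline T=S^*$ and $\overline{\widetilde T}=\widetilde S^*$. A triple $\{\mathcal G,(\Gamma_0,\Gamma_1),(\widetilde\Gamma_0,\widetilde\Gamma_1)\}$ for $\{S,\widetilde S\}$ consists of a Hilbert space $\mathcal G$ and linear maps $\Gamma_0,\Gamma_1:\operatorname{dom}T\to\mathcal G$, $\widetilde\Gamma_0,\widetilde\Gamma_1:\operatorname{dom}\widetilde T\to\mathcal G$. Put $A_0:=T\upharpoonright\ker\Gamma_0$ and $\widetilde A_0:=\widetilde T\upharpoonright\ker\widetilde\Gamma_0$. Conditions: (G) $(Tf,g)_{\mathfrak H}-(f,\widetilde Tg)_{\mathfrak H}=(\Gamma_1f,\widetilde\Gamma_0g)_{\mathcal G}-(\Gamma_0f,\widetilde\Gamma_1g)_{\mathcal G}$ for all $f\in\operatorname{dom}T$, $g\in\operatorname{dom}\widetilde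 T$; (D) $\operatorname{ran}\Gamma_0$ and $\operatorname{ran}\widetilde\Gamma_0$ are dense in $\mathcal G$; (M) $A_0^*=\widetilde A_0$ and $\widetilde A_0^*=A_0$. For $\lambda\in\rho(A_0)$ one has $\operatorname{dom}T=\ker\Gamma_0\dotplus\ker(T-\lambda)$, so $\Gamma_0\upharpoonright\ker(T-\lambda)$ is injective; similarly for $\widetilde T$. The $\gamma$-fields are $\gamma(\lambda):=(\Gamma_0\upharpoonright\ker(T-\lambda))^{-1}$, $\lambda\in\rho(A_0)$, and $\widetilde\gamma(\mu):=(\widetilde\Gamma_0\upharpoonright\ker(\widetilde T-\mu))^{-1}$, $\mu\in\rho(\widetilde A_0)$; the Weyl functions are $M(\lambda):=\Gamma_1\gamma(\lambda)$ and $\widetilde M(\mu):=\widetilde\Gamma_1\widetilde\gamma(\mu)$. *)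

(* Defs.v *)
From mathcomp Require Import all_boot all_order all_algebra.
From mathcomp Require Import reals.
From mathcomp.real_closed Require Export complex.
Import Order.TTheory GRing.Theory Num.Theory.

Set Implicit Arguments.
Unset Strict Implicit.
Unset Printing Implicit Defensive.

Local Open Scope ring_scope.

(* Convention: ip is linear in the first and antilinear in the second  *)
(* argument, as in (Tf,g) - (f,T~g) of the paper.                      *)
Section InnerProduct.
Variable R : realType.
Variable V : lmodType R[i].
Variable ip : V -> V -> R[i].

Definition hnorm (x : V) : R := Num.sqrt (complex.Re (ip x x)).

Definition cvg_to (u : nat -> V) (x : V) : Prop :=
  forall e : R, 0 < e -> exists N : nat, forall n : nat, (N <= n)%N ->
    hnorm (u n - x) < e.

Definition cauchy_seq (u : nat -> V) : Prop :=
  forall e : R, 0 < e -> exists N : nat, forall m n : nat,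
    (N <= m)%N -> (N <= n)%N -> hnorm (u m - u n) < e.

Definition dense (A : V -> Prop) : Prop :=
  forall (x : V) (e : R), 0 < e -> exists a, A a /\ hnorm (x - a) < e.

Record is_hilbert : Prop := IsHilbert {
  ip_linear : forall (a : R[i]) (x y z : V), ip (a *: x + y) z = a * ip x z + ip y z;
  ip_hermitian : forall x y : V, ip y x = (ip x y)^*;
  ip_ge0 : forall x : V, 0 <= ip x x;
  ip_eq0 : forall x : V, ip x x = 0 -> x = 0;
  ip_complete : forall u : nat -> V, cauchy_seq u -> exists x, cvg_to u x }.

Definition separable : Prop :=
  exists s : nat -> V, dense (fun x => exists n, x = s n).

End InnerProduct.

(* (Possibly unbounded, possibly multivalued) linear relations, given  *)
(* by their graphs; an operator is a single-valued linear relation.    *)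
(* Operator equality / inclusion = equality / inclusion of graphs.     *)
Definition op (V W : Type) := V -> W -> Prop.

Section Operators.
Variable R : realType.

Definition op_le (V W : Type) (A B : op V W) : Prop := forall x y, A x y -> B x y.
Definition op_eq (V W : Type) (A B : op V W) : Prop := forall x y, A x y <-> B x y.

Definition dom (V W : Type) (A : op V W) : V -> Prop := fun x => exists y, A x y.
Definition ran (V W : Type) (A : op V W) : W -> Prop := fun y => exists x, A x y.

Definition single_valued (V W : Type) (A : op V W) : Prop :=
  forall x y1 y2, A x y1 -> A x y2 -> y1 = y2.

Definition linear_rel (V W : lmodType R[i]) (A : op V W) : Prop :=
  A 0 0 /\ forall (a : R[i]) x1 y1 x2 y2, A x1 y1 -> A x2 y2 ->
    A (a *: x1 + x2) (a *: y1 + y2).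

Definition is_operator (V W : lmodType R[i]) (A : op V W) : Prop :=
  linear_rel A /\ single_valued A.

Definition linear_on (V W : lmodType R[i]) (D : V -> Prop) (f : V -> W) : Prop :=
  forall (a : R[i]) x y, D x -> D y -> f (a *: x + y) = a *: f x + f y.

Definition image_on (V W : Type) (D : V -> Prop) (f : V -> W) : W -> Prop :=
  fun y => exists x, D x /\ y = f x.

Definition graph_on (V W : Type) (D : V -> Prop) (f : V -> W) : op V W :=
  fun x y => D x /\ y = f x.

Definition op_id (V : Type) : op V V := fun x y => y = x.
Definition op_inv (V W : Type) (A : op V W) : op W V := fun y x => A x y.
Definition op_comp (U V W : Type) (B : op V W) (A : op U V) : op U W :=
  fun x z => exists y, A x y /\ B y z.
Definition op_sum (V W : lmodType R[i]) (A B : op V W) : op V W :=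
  fun x y => exists y1 y2, A x y1 /\ B x y2 /\ y = y1 + y2.
Definition op_diff (V W : lmodType R[i]) (A B : op V W) : op V W :=
  fun x y => exists y1 y2, A x y1 /\ B x y2 /\ y = y1 - y2.
Definition op_scale (V W : lmodType R[i]) (c : R[i]) (A : op V W) : op V W :=
  fun x y => exists y1, A x y1 /\ y = c *: y1.

Variables (V W : lmodType R[i]) (ipV : V -> V -> R[i]) (ipW : W -> W -> R[i]).

Definition adjoint (A : op V W) : op W V :=
  fun y z => forall x w, A x w -> ipW w y = ipV x z.

Definition op_closure (A : op V W) : op V W :=
  fun x y => exists (u : nat -> V) (v : nat -> W),
    (forall n, A (u n) (v n)) /\ cvg_to ipV u x /\ cvg_to ipW v y.

Definition closed_op (A : op V W) : Prop := op_le (op_closure A) A.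

Definition densely_defined (A : op V W) : Prop := dense ipV (dom A).

Definition bounded_op (A : op V W) : Prop :=
  exists c : R, forall x y, A x y -> hnorm ipW y <= c * hnorm ipV x.

End Operators.

Section Spectral.
Variable R : realType.
Variables (V : lmodType R[i]) (ip : V -> V -> R[i]).

Definition resolvent (A : op V V) (lam : R[i]) : op V V :=
  op_inv (op_diff A (op_scale lam (@op_id V))).

Definition resolvent_set (A : op V V) (lam : R[i]) : Prop :=
  single_valued (resolvent A lam) /\ (forall x, dom (resolvent A lam) x) /\
  bounded_op ip ip (resolvent A lam).

End Spectral.

Section BoundaryTriple.
Variable R : realType.
Variables (H G : lmodType R[i]).

Definition A0_of (T : op H H) (Gam0 : H -> G) : op H H :=
  fun f y => T f y /\ Gam0 f = 0.

Definition gamma_field (T : op H H) (Gam0 : H -> G) (lam : R[i]) : op G H :=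
  fun h f => T f (lam *: f) /\ h = Gam0 f.

Definition weyl_fun (T : op H H) (Gam0 Gam1 : H -> G) (lam : R[i]) : op G G :=
  op_comp (graph_on (dom T) Gam1) (gamma_field T Gam0 lam).

End BoundaryTriple.

(* Main.v *)
Require Import Defs.
From mathcomp Require Import all_boot all_order all_algebra.
From mathcomp Require Import reals.
From mathcomp.real_closed Require Import complex.
From mathcomp Require Import ring lra.
Import Order.TTheory GRing.Theory Num.Theory.
Local Open Scope ring_scope.
Set Implicit Arguments.
Unset Strict Implicit.
Unset Printing Implicit Defensive.

Section Hilb.
Variable R : realType.
Variable V : lmodType R[i].
Variable ip : V -> V -> R[i].
Hypothesis hV : is_hilbert ip.

Lemma ip0l z : ip 0 z = 0.
Proof.
have := ip_linear hV 1 0 0 z; rewrite scaler0 addr0 mul1r.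
by move/(congr1 (fun w => w - ip 0 z)); rewrite subrr addrK => <-.
Qed.
Lemma ipDl x y z : ip (x + y) z = ip x z + ip y z.
Proof. by have := ip_linear hV 1 x y z; rewrite scale1r mul1r. Qed.
Lemma ipZl a x z : ip (a *: x) z = a * ip x z.
Proof. by have := ip_linear hV a x 0 z; rewrite addr0 ip0l addr0. Qed.
Lemma ipNl x z : ip (- x) z = - ip x z.
Proof. by rewrite -scaleN1r ipZl mulN1r. Qed.
Lemma ipBl x y z : ip (x - y) z = ip x z - ip y z.
Proof. by rewrite ipDl ipNl. Qed.
Lemma ip0r z : ip z 0 = 0.
Proof. by rewrite (ip_hermitian hV) ip0l conjC0. Qed.
Lemma ipDr x y z : ip z (x + y) = ip z x + ip z y.
Proof. by rewrite !(ip_hermitian hV _ z) ipDl rmorphD. Qed.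
Lemma ipZr a x z : ip z (a *: x) = a^* * ip z x.
Proof. by rewrite (ip_hermitian hV _ z) (ip_hermitian hV x z) ipZl rmorphM. Qed.
Lemma ipNr x z : ip z (- x) = - ip z x.
Proof. by rewrite -scaleN1r ipZr conjCN1 mulN1r. Qed.
Lemma ipBr x y z : ip z (x - y) = ip z x - ip z y.
Proof. by rewrite ipDr ipNr. Qed.

Definition N2 (x : V) : R := complex.Re (ip x x).

Lemma geC0_Re (z : R[i]) : 0 <= z -> z = (complex.Re z)%:C%C.
Proof. by case: z => a b; rewrite lecE /= => /andP[/eqP -> _]. Qed.

Lemma ipN2 x : ip x x = (N2 x)%:C%C.
Proof. exact: geC0_Re (ip_ge0 hV x). Qed.
Lemma N2_ge0 x : 0 <= N2 x.
Proof. by have := ip_ge0 hV x; rewrite ipN2 lecR. Qed.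
Lemma N2_eq0 x : N2 x = 0 -> x = 0.
Proof. by move=> h; apply: (ip_eq0 hV); rewrite ipN2 h. Qed.

Lemma hnorm_lt x e : 0 < e -> (hnorm ip x < e) <-> (N2 x < e ^+ 2).
Proof.
move=> e0; rewrite /hnorm -/(N2 x).
rewrite -[X in _ < X <-> _](gtr0_norm e0) -sqrtr_sqr ltr_sqrt ?exprn_gt0 //.
Qed.



Lemma CS x y : ip x y * ip y x <= ip x x * ip y y.
Proof.
have [y0|ny0] := eqVneq y 0.
  by rewrite y0 !ip0r !ip0l !mulr0 lexx.
set p := ip x y; set q := ip y y.
have q0 : q != 0 by apply/eqP => /(ip_eq0 hV) y0; move/eqP: ny0.
have qgt : 0 < q by rewrite lt_def q0 (ip_ge0 hV).
have qc : q^* = q by rewrite geC0_conj // ltW.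
have hyx : ip y x = p^* by rewrite (ip_hermitian hV).
set t := p / q.
have := ip_ge0 hV (x - t *: y).
rewrite !ipBl !ipBr !ipZl !ipZr hyx -/p -/q.
have -> : t^* = p^* / q by rewrite /t rmorphM fmorphV -[in RHS]qc.
have e : forall X, X - p^* / q * p - (t * p^* - t * (p^* / q * q)) =
   (X * q - p * p^*) / q by move=> X; rewrite /t; field.
by rewrite e pmulr_lge0 ?invr_gt0 // subr_ge0; apply.
Qed.

Lemma RCS x y : (complex.Re (ip x y)) ^+ 2 <= N2 x * N2 y.
Proof.
have := CS x y; rewrite !ipN2 (ip_hermitian hV x y).
case: (ip x y) => a b /=; rewrite lecE /= => /andP[_ h]; nra.
Qed.


Lemma conjM (a b : R[i]) : (a * b)^* = a^* * b^*.
Proof. exact: rmorphM. Qed.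

Lemma ReD (a b : R[i]) : complex.Re (a + b) = complex.Re a + complex.Re b.
Proof. by case: a; case: b. Qed.

Lemma Re_nat n : complex.Re (n%:R : R[i]) = n%:R.
Proof. elim: n => // n IH; by rewrite -addn1 !natrD ReD IH. Qed.

Lemma N2D x y : N2 (x + y) = N2 x + N2 y + 2 * complex.Re (ip x y).
Proof.
rewrite /N2 ipDl !ipDr (ip_hermitian hV x y) !ipN2.
by case: (ip x y) => a b /=; ring.
Qed.

Lemma N2Z c x : N2 (c *: x) = complex.Re (c * c^*) * N2 x.
Proof. by rewrite /N2 ipZl ipZr ipN2; case: c => a b /=; ring. Qed.

Lemma N2N x : N2 (- x) = N2 x.
Proof. by rewrite /N2 ipNl ipNr opprK. Qed.

Lemma N2B x y : N2 (x - y) = N2 (y - x).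
Proof. by rewrite -N2N opprB. Qed.

Lemma para x y : N2 (x + y) + N2 (x - y) = 2 * N2 x + 2 * N2 y.
Proof. rewrite !N2D N2N ipNr; case: (ip x y) => a b /=; ring. Qed.

End Hilb.

Lemma eventually_inv (R : realType) (e : R) : 0 < e ->
  exists N : nat, forall n, (N <= n)%N -> (n.+1%:R)^-1 < e.
Proof.
move=> e0; exists (Num.bound (e^-1)) => n Nn.
rewrite invf_plt ?posrE ?ltr0Sn //.
apply: (lt_le_trans (archi_boundP _)); first by rewrite invr_ge0 ltW.
by rewrite ler_nat; apply: leq_trans Nn _.
Qed.

Lemma le0_small (R : realType) (r C : R) :
  (forall d, 0 < d -> exists s, 0 <= s /\ s < d /\ r <= C * s) -> r <= 0.
Proof.
move=> h; rewrite leNgt; apply/negP => r0.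
have [C0|C0] := lerP C 0.
  have [s [s0 [_ rs]]] := h 1 ltr01.
  have : C * s <= 0 by rewrite mulr_le0_ge0.
  by move=> H; move: (le_trans rs H); rewrite leNgt r0.
have [s [s0 [sd rs]]] := h (r / C) (divr_gt0 r0 C0).
move: sd; rewrite ltr_pdivlMr // mulrC => /(le_lt_trans rs); by rewrite ltxx.
Qed.

From mathcomp Require Import classical_sets boolp.
Local Open Scope classical_set_scope.

Section Riesz.
Variable R : realType.
Variable V : lmodType R[i].
Variable ip : V -> V -> R[i].
Hypothesis hV : is_hilbert ip.
Local Notation N2 := (N2 ip).

Lemma riesz (phi : V -> R[i]) (C : R) :
  (forall a x y, phi (a *: x + y) = a * phi x + phi y) ->
  (forall y, complex.Re (phi y * (phi y)^*) <= C * N2 y) ->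
  exists u, forall y, phi y = ip y u.
Proof.
move=> phiL phiBd.
have phi0 : phi 0 = 0.
  have := phiL 1 0 0; rewrite scaler0 addr0 mul1r.
  by move/(congr1 (fun w => w - phi 0)); rewrite subrr addrK => <-.
have phiD x y : phi (x + y) = phi x + phi y.
  by have := phiL 1 x y; rewrite scale1r mul1r.
have phiZ a x : phi (a *: x) = a * phi x.
  by have := phiL a x 0; rewrite addr0 phi0 addr0.
have phiN x : phi (- x) = - phi x by rewrite -scaleN1r phiZ mulN1r.
have phiB x y : phi (x - y) = phi x - phi y by rewrite phiD phiN.
case: (pselect (exists y0, phi y0 != 0)); last first.
  move=> nex; exists 0 => y; rewrite (ip0r hV).
  by apply/eqP; apply/negPn/negP => hy; apply: nex; exists y.
case=> y0 hy0.
set x0 := (phi y0)^-1 *: y0.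
have phix0 : phi x0 = 1 by rewrite phiZ mulVf.
set S := [set r : R | exists k, phi k = 0 /\ r = N2 (x0 - k)].
have hS : has_inf S.
  split; first by exists (N2 (x0 - 0)); exists 0.
  by exists 0 => r [k [_ ->]]; apply: N2_ge0.
set d := inf S.
have dle k : phi k = 0 -> d <= N2 (x0 - k).
  by move=> hk; apply: (ge_inf hS.2); exists k.
have d0 : 0 <= d by apply: lb_le_inf hS.1 _ => r [k [_ ->]]; apply: N2_ge0.
have hseq : forall n : nat, exists k, phi k = 0 /\ N2 (x0 - k) < d + (n.+1%:R)^-1.
  move=> n; have hp : 0 < (n.+1%:R : R)^-1 by rewrite invr_gt0 ltr0Sn.
  have [e [k [hk ->]] he] := inf_adherent hp hS.
  by exists k.
have [ks hks] := choice hseq.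
have cauchy : cauchy_seq ip ks.
  move=> e e0.
  have e40 : 0 < e ^+ 2 / 4%:R by rewrite divr_gt0 ?exprn_gt0 ?ltr0n.
  have [N hN] := eventually_inv e40.
  exists N => m n Nm Nn; rewrite hnorm_lt //.
  have := para hV (x0 - ks n) (x0 - ks m).
  have -> : x0 - ks n + (x0 - ks m) = 2%:R *: (x0 - 2%:R^-1 *: (ks n + ks m)).
    rewrite scalerBr (scalerA 2%:R 2%:R^-1) mulfV ?pnatr_eq0 // scale1r scaler_nat mulr2n.
    by rewrite addrACA opprD.
  have -> : x0 - ks n - (x0 - ks m) = ks m - ks n.
    by rewrite opprB addrC addrA subrK.
  rewrite (N2Z hV).
  have hm := hks m; have hn := hks n.
  have := dle (2%:R^-1 *: (ks n + ks m)).
  rewrite phiZ phiD hm.1 hn.1 addr0 mulr0 => /(_ erefl) hd.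
  have -> : complex.Re (2%:R * (2%:R : R[i])^*) = 4.
    by rewrite conjC_nat -natrM Re_nat.
  move=> hp.
  have := hN m Nm; have := hN n Nn.
  move: hm.2 hn.2 hd hp; set a := (m.+1%:R)^-1; set b := (n.+1%:R)^-1.
  move=> h1 h2 h3 h4 h5 h6.
  have hq : e ^+ 2 = 4 * (e ^+ 2 / 4) by field.
  rewrite hq; lra.
have [k cvk] := ip_complete hV cauchy.
have small : forall dl, 0 < dl -> exists N, forall n, (N <= n)%N -> N2 (ks n - k) < dl.
  move=> dl dl0; have sq0 : 0 < Num.sqrt dl by rewrite sqrtr_gt0.
  have [N hN] := cvk (Num.sqrt dl) sq0.
  exists N => n Nn; have := hN n Nn; rewrite hnorm_lt ?sqrtr_gt0 //.
  by rewrite sqr_sqrtr // ltW.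
have phik : phi k = 0.
  set z := phi k.
  have zz : 0 <= z * z^* by apply: mul_conjC_ge0.
  have : complex.Re (z * z^*) <= 0.
    apply: (@le0_small _ _ C) => dl dl0.
    have [N hN] := small dl dl0.
    exists (N2 (ks N - k)); split; first exact: N2_ge0.
    split; first exact: hN.
    have := phiB (ks N) k; rewrite (hks N).1 sub0r -/z => hz.
    have -> : z * z^* = phi (ks N - k) * (phi (ks N - k))^*.
      by rewrite hz rmorphN mulrNN.
    exact: phiBd.
  move=> hle; have h0 : z * z^* = 0.
    rewrite (geC0_Re zz); congr (_%:C%C); apply/eqP; rewrite eq_le hle /=.
    by move: zz; rewrite lecE => /andP[].
  by apply/eqP; rewrite -mul_conjC_eq0 h0.
set v := x0 - k.
have phiv : phi v = 1 by rewrite phiB phix0 phik subr0.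
have vle : N2 v <= d.
  rewrite leNgt; apply/negP => dv.
  set eps := N2 v - d.
  have eps0 : 0 < eps by rewrite subr_gt0.
  have e30 : 0 < eps / 3%:R by rewrite divr_gt0 ?ltr0n.
  have [N1 hN1] := eventually_inv e30.
  set dl := Num.min (eps / 3%:R) ((eps / 3%:R) ^+ 2 / (4%:R * (d + 1))).
  have dl0 : 0 < dl.
    by rewrite lt_min divr_gt0 ?ltr0n // divr_gt0 ?exprn_gt0 ?divr_gt0 ?ltr0n
      // mulr_gt0 ?ltr0n // ltr_wpDl.
  have [N2' hN2] := small dl dl0.
  set n := maxn N1 N2'.
  have h1 := hN1 n (leq_maxl _ _).
  have h2 := hN2 n (leq_maxr _ _).
  have h3 := (hks n).2.
  have hv : v = (x0 - ks n) + (ks n - k) by rewrite addrA subrK.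
  have h4 := RCS hV (x0 - ks n) (ks n - k).
  have h5 := N2D hV (x0 - ks n) (ks n - k).
  rewrite -hv in h5.
  have h6 : dl <= eps / 3%:R by rewrite ge_min lexx.
  have h7 : dl <= (eps / 3%:R) ^+ 2 / (4%:R * (d + 1)) by rewrite ge_min lexx orbT.
  have h8 : (n.+1%:R : R)^-1 <= 1 by rewrite invf_le1 ?ler1n ?ltr0Sn.
  have hd1 : 0 < 4%:R * (d + 1) by rewrite mulr_gt0 ?ltr0n // ltr_wpDl.
  move: h7; rewrite ler_pdivlMr // => h7.
  move: h1 h2 h3 h4 h5 h6 h7 h8.
  set A := N2 (x0 - ks n); set B := N2 (ks n - k).
  set r := complex.Re _; set a := (n.+1%:R)^-1; set e3 := eps / 3%:R.
  move=> h1 h2 h3 h4 h5 h6 h7 h8.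
  have hA0 : 0 <= A by apply: N2_ge0.
  have hB0 : 0 <= B by apply: N2_ge0.
  have he : eps = 3%:R * e3 by rewrite /e3 mulrC divfK ?pnatr_eq0.
  have hB : B < e3 by apply: lt_le_trans h2 h6.
  have hBB : 4%:R * (d + 1) * B <= e3 ^+ 2 by
    apply: le_trans h7; rewrite mulrC ler_wpM2r ?ltW // ltW.
  have h2r : 2 * r <= e3.
    have : 4%:R * r ^+ 2 <= 4%:R * (d + 1) * B.
      rewrite -mulrA ler_pM2l ?ltr0n //; apply: (le_trans h4).
      by rewrite ler_wpM2r // ltW // (lt_le_trans h3) // lerD2l.
    move/le_trans/(_ hBB) => H; nra.
  have heps : eps = N2 v - d by [].
  have : N2 v < N2 v by rewrite {1}h5; lra.
  by rewrite ltxx.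
have orth : forall w, phi w = 0 -> ip v w = 0.
  move=> w hw; set p := ip v w; set Q := N2 w; set s := (Q + 1)^-1.
  set t := (s%:C%C) * p.
  have hle : N2 v <= N2 (v - t *: w).
    apply: le_trans vle _.
    have -> : v - t *: w = x0 - (k + t *: w) by rewrite /v opprD addrA.
    by apply: dle; rewrite phiD phiZ phik hw mulr0 addr0.
  rewrite (N2D hV v (- (t *: w))) (N2N hV) (N2Z hV) (ipNr hV) (ipZr hV) -/p -/Q in hle.
  have Q0 : 0 <= Q by apply: N2_ge0.
  have s0 : 0 < s by rewrite invr_gt0 ltr_wpDl.
  have hs : s * (Q + 1) = 1 by rewrite mulVf // gt_eqF // ltr_wpDl.
  move: hle; rewrite /t; clear t; case: p => a b /= hle.
  have h1 : s * (1 + s) * (a ^+ 2 + b ^+ 2) <= 0 by nra.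
  have h2 : a ^+ 2 + b ^+ 2 <= 0.
    by move: h1; rewrite pmulr_rle0 // mulr_gt0 // ltr_wpDr // ltW.
  have ha : a = 0 by apply/eqP; rewrite -sqrf_eq0 eq_le sqr_ge0 andbT; nra.
  have hb : b = 0 by apply/eqP; rewrite -sqrf_eq0 eq_le sqr_ge0 andbT; nra.
  by rewrite ha hb.
have ipvv : ip v v != 0.
  apply/eqP => /(ip_eq0 hV) v0; move: phiv; rewrite v0 phi0 => /eqP.
  by rewrite eq_sym oner_eq0.
exists (((ip v v)^-1)^* *: v) => y.
rewrite (ipZr hV) conjCK.
have hy : phi (y - phi y *: v) = 0 by rewrite phiB phiZ phiv mulr1 subrr.
have := orth _ hy; rewrite (ipBr hV) (ipZr hV) => /eqP; rewrite subr_eq0 => /eqP h.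
have -> : ip y v = phi y * ip v v.
  by rewrite (ip_hermitian hV) h conjM conjCK (ipN2 hV v) geC0_conj ?ler0c ?N2_ge0.
by field.
Qed.

End Riesz.

Lemma orth_dense (R : realType) (V : lmodType R[i]) (ip : V -> V -> R[i])
  (hV : is_hilbert ip) (D : V -> Prop) (v : V) :
  dense ip D -> (forall x, D x -> ip x v = 0) -> v = 0.
Proof.
move=> dD hD; apply: (N2_eq0 hV); apply/eqP; rewrite eq_le; apply/andP.
split; last exact: N2_ge0.
rewrite leNgt; apply/negP => v0.
have sq0 : 0 < Num.sqrt (N2 ip v) by rewrite sqrtr_gt0.
have [a [Da ha]] := dD v (Num.sqrt (N2 ip v)) sq0.
move: ha; rewrite hnorm_lt // sqr_sqrtr ?N2_ge0 // (N2D hV) (N2N hV) (ipNr hV).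
rewrite (ip_hermitian hV a v) hD // conjC0 oppr0 => h2.
have h0 : complex.Re (0 : R[i]) = 0 by [].
rewrite h0 mulr0 addr0 in h2.
have h1 := N2_ge0 hV a.
have : N2 ip v < N2 ip v by apply: le_lt_trans h2; rewrite lerDl.
by rewrite ltxx.
Qed.

Section Half.
Variables (R : realType) (H G : lmodType R[i]) (ipH : H -> H -> R[i]).
Variables (T : op H H) (Gam0 Gam1 : H -> G).
Hypotheses (opT : is_operator T) (linG0 : linear_on (dom T) Gam0)
  (linG1 : linear_on (dom T) Gam1).
Local Notation rs := (resolvent_set ipH (A0_of T Gam0)).

Lemma T0 : T 0 0. Proof. exact: opT.1.1. Qed.
Lemma TL a x1 y1 x2 y2 : T x1 y1 -> T x2 y2 -> T (a *: x1 + x2) (a *: y1 + y2).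
Proof. exact: opT.1.2. Qed.
Lemma domT0 : dom T 0. Proof. by exists 0; apply: T0. Qed.
Lemma lin0 (F : H -> G) : linear_on (dom T) F -> F 0 = 0.
Proof.
move=> lF; have := lF 1 0 0 domT0 domT0; rewrite scaler0 addr0 scale1r.
by move/(congr1 (fun w => w - F 0)); rewrite subrr addrK => <-.
Qed.
Lemma linB (F : H -> G) x y : linear_on (dom T) F -> dom T x -> dom T y ->
  F ((-1) *: y + x) = F x - F y.
Proof. by move=> lF dx dy; rewrite lF // scaleN1r addrC. Qed.

Lemma decomp lam : rs lam -> forall f, dom T f ->
  exists g, T g (lam *: g) /\ Gam0 g = Gam0 f.
Proof.
move=> [_ [tot _]] f [y Tfy].
have [f0 [y1 [y2 [[Tf0 G0f0] [[y3 [-> ->]] hy]]]]] := tot (y - lam *: f).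
exists ((-1) *: f0 + f); split.
  have := TL (-1) Tf0 Tfy.
  have -> : (-1) *: y1 + y = lam *: ((-1) *: f0 + f); last by [].
  have ey : y = y1 - lam *: f0 + lam *: f by rewrite -hy subrK.
  rewrite ey scalerDr scalerA mulrN1 !scaleN1r scaleNr.
  by rewrite !addrA addNr add0r.
have df : dom T f by exists y.
have df0 : dom T f0 by exists y1.
by rewrite (linB linG0 df df0) G0f0 subr0.
Qed.

Lemma kerU lam u : rs lam -> T u (lam *: u) -> Gam0 u = 0 -> u = 0.
Proof.
move=> [sv _] Tu G0u; apply: (sv 0).
  by exists (lam *: u), (lam *: u); do !split => //; [exists u | rewrite subrr].
exists 0, 0; do !split; first exact: T0.
  exact: lin0 linG0.
by exists 0; rewrite scaler0.
by rewrite subrr.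
Qed.

Lemma uniqK lam g1 g2 : rs lam -> T g1 (lam *: g1) -> T g2 (lam *: g2) ->
  Gam0 g1 = Gam0 g2 -> g1 = g2.
Proof.
move=> rl T1 T2 e; apply/eqP; rewrite -subr_eq0; apply/eqP.
rewrite -scaleN1r addrC; apply: (kerU rl).
  have := TL (-1) T2 T1; congr (T _ _).
  by rewrite scalerDr !scalerA mulrC.
have d1 : dom T g1 by exists (lam *: g1).
have d2 : dom T g2 by exists (lam *: g2).
by rewrite (linB linG0 d1 d2) e subrr.
Qed.

Lemma ker_shift lam0 lam f r : T f (lam0 *: f) ->
  resolvent (A0_of T Gam0) lam f r ->
  T (f + (lam - lam0) *: r) (lam *: (f + (lam - lam0) *: r)) /\
  Gam0 (f + (lam - lam0) *: r) = Gam0 f.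
Proof.
move=> Tf [a [b [[Tra G0r] [[b1 [-> ->]] hf]]]].
have ha : a = f + lam *: r by rewrite hf subrK.
split.
  have e1 : f + (lam - lam0) *: r = (lam - lam0) *: r + f by rewrite addrC.
  have e2 : lam *: (f + (lam - lam0) *: r) = (lam - lam0) *: a + lam0 *: f.
    rewrite ha scalerDr scalerA [in RHS]scalerDr scalerA.
    by rewrite addrAC -scalerDl subrK [lam * _]mulrC.
  by rewrite e2 e1; apply: TL.
rewrite addrC linG0 ?G0r ?scaler0 ?add0r //; first by exists a.
by exists (lam0 *: f).
Qed.

End Half.

Local Close Scope classical_set_scope.

Section Main.
Variables (R : realType) (H G : lmodType R[i]) (ipH : H -> H -> R[i]) (ipG : G -> G -> R[i]).
Hypotheses (hH : is_hilbert ipH) (hG : is_hilbert ipG).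
Variables (T Tt : op H H) (Gam0 Gam1 Gamt0 Gamt1 : H -> G).
Hypotheses (opT : is_operator T) (opTt : is_operator Tt).
Hypotheses (linG0 : linear_on (dom T) Gam0) (linG1 : linear_on (dom T) Gam1).
Hypotheses (linGt0 : linear_on (dom Tt) Gamt0) (linGt1 : linear_on (dom Tt) Gamt1).
Hypothesis condP : forall f Tf g Ttg, T f Tf -> Tt g Ttg ->
  ipH g Tf - ipH Ttg f = ipG (Gamt0 g) (Gam1 f) - ipG (Gamt1 g) (Gam0 f).
Hypothesis condDt0 : dense ipG (image_on (dom Tt) Gamt0).
Hypothesis condM2 : op_eq (adjoint ipH ipH (A0_of Tt Gamt0)) (A0_of T Gam0).

Local Notation rs := (resolvent_set ipH (A0_of T Gam0)).
Local Notation rst := (resolvent_set ipH (A0_of Tt Gamt0)).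

Lemma part_i lam : rs lam -> dense ipG (image_on (dom T) Gam0) ->
  is_operator (weyl_fun T Gam0 Gam1 lam) /\
  (forall h, dom (weyl_fun T Gam0 Gam1 lam) h <-> image_on (dom T) Gam0 h) /\
  dense ipG (dom (weyl_fun T Gam0 Gam1 lam)) /\
  (forall k, ran (weyl_fun T Gam0 Gam1 lam) k -> image_on (dom T) Gam1 k).
Proof.
move=> rl dD.
have hdom : forall h, dom (weyl_fun T Gam0 Gam1 lam) h <-> image_on (dom T) Gam0 h.
  move=> h; split.
    by case=> k [g [[Tg ->] [dg _]]]; exists g.
  case=> f [df ->]; have [g [Tg eg]] := decomp opT linG0 rl df.
  by exists (Gam1 g), g; split; split => //; exists (lam *: g).
split; last split => //; last split.
- split; last first.
    move=> h y1 y2 [g1 [[T1 ->] [_ ->]]] [g2 [[T2 e] [_ ->]]].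
    by rewrite (uniqK opT linG0 rl T1 T2 e).
  split.
    exists 0; split; first by split; [rewrite scaler0; apply: T0 | rewrite (lin0 opT linG0)].
    by split; [apply: domT0 | rewrite (lin0 opT linG1)].
  move=> a x1 y1 x2 y2 [g1 [[T1 ->] [d1 ->]]] [g2 [[T2 ->] [d2 ->]]].
  exists (a *: g1 + g2); split; last by split; [exists (a *: (lam *: g1) + lam *: g2); apply: TL | rewrite linG1].
  split; last by rewrite linG0.
  have := TL opT a T1 T2; congr (T _ _).
  by rewrite scalerDr !scalerA mulrC.
- by move=> x e e0; have [a [Da ha]] := dD x e e0; exists a; split => //; apply/hdom.
- by move=> k [h [g [_ [dg ->]]]]; exists g.
Qed.

Lemma key lam mu g g' : T g (lam *: g) -> Tt g' (mu *: g') ->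
  ipG (Gamt0 g') (Gam1 g) - ipG (Gamt1 g') (Gam0 g) = (lam^* - mu) * ipH g' g.
Proof.
move=> Tg Tg'; rewrite -(condP Tg Tg') (ipZr hH) (ipZl hH).
by rewrite mulrBl.
Qed.

Lemma incl lam : op_le (weyl_fun T Gam0 Gam1 lam)
  (adjoint ipG ipG (weyl_fun Tt Gamt0 Gamt1 lam^*)).
Proof.
move=> h k [g [[Tg ->] [_ ->]]] x w [g' [[Tg' ->] [_ ->]]].
have := key Tg Tg'; rewrite subrr mul0r => /eqP; rewrite subr_eq0 => /eqP.
by move=> ->.
Qed.


Lemma res_lin mu a y1 x1 y2 x2 :
  resolvent (A0_of Tt Gamt0) mu y1 x1 -> resolvent (A0_of Tt Gamt0) mu y2 x2 ->
  resolvent (A0_of Tt Gamt0) mu (a *: y1 + y2) (a *: x1 + x2).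
Proof.
move=> [w1 [s1 [[T1 G1] [[s [-> ->]] ->]]]] [w2 [s2 [[T2 G2] [[s' [-> ->]] ->]]]].
exists (a *: w1 + w2), (mu *: (a *: x1 + x2)); split.
  split; first exact: TL.
  by rewrite linGt0 ?G1 ?G2 ?scaler0 ?addr0 //; [exists w1 | exists w2].
split; first by exists (a *: x1 + x2).
rewrite !scalerBr scalerDr !scalerA [mu * a]mulrC opprD.
by rewrite addrACA.
Qed.

Lemma adj_exists mu : rst mu -> forall f, exists z,
  adjoint ipG ipH (gamma_field Tt Gamt0 mu) f z.
Proof.
move=> [sv [tot [c bd]]] f.
have [bf hbf] := choice tot.
pose phi y := ipH (bf y) f.
have bfL a y1 y2 : bf (a *: y1 + y2) = a *: bf y1 + bf y2.
  by apply: (sv (a *: y1 + y2)); [apply: hbf | apply: res_lin].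
have phiL a y1 y2 : phi (a *: y1 + y2) = a * phi y1 + phi y2.
  by rewrite /phi bfL (ip_linear hH).
have phiB y : complex.Re (phi y * (phi y)^*) <= (c ^+ 2 * N2 ipH f) * N2 ipH y.
  have h1 : complex.Re (phi y * (phi y)^*) <= N2 ipH (bf y) * N2 ipH f.
    have := CS hH (bf y) f; rewrite (ip_hermitian hH (bf y) f) !(ipN2 hH).
    rewrite lecE => /andP[_ h]; apply: le_trans h _.
    by rewrite /= mulr0 subr0.
  apply: le_trans h1 _.
  have hb := bd _ _ (hbf y).
  have n1 : hnorm ipH (bf y) ^+ 2 = N2 ipH (bf y) by rewrite sqr_sqrtr // N2_ge0.
  have n2 : hnorm ipH y ^+ 2 = N2 ipH y by rewrite sqr_sqrtr // N2_ge0.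
  have p1 : 0 <= hnorm ipH (bf y) by apply: sqrtr_ge0.
  have p2 : 0 <= hnorm ipH y by apply: sqrtr_ge0.
  have p3 := N2_ge0 hH f.
  have hsq : N2 ipH (bf y) <= c ^+ 2 * N2 ipH y by rewrite -n1 -n2; nra.
  nra.
have [u hu] := riesz hH phiL phiB.
have hA : A0_of T Gam0 u (mu^* *: u + f).
  apply/condM2 => x w [Txw G0x].
  have rx : resolvent (A0_of Tt Gamt0) mu (w - mu *: x) x.
    by exists w, (mu *: x); split => //; split => //; exists x.
  have ex : bf (w - mu *: x) = x by apply: (sv (w - mu *: x)); [apply: hbf | ].
  have := hu (w - mu *: x); rewrite /phi ex (ipBl hH) (ipZl hH) => h.
  rewrite (ipDr hH) (ipZr hH) conjCK h.
  by rewrite addrC subrK.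
case: hA => TA G0u.
exists (Gam1 u) => x g' [Tg' ->].
have := condP TA Tg'; rewrite G0u (ip0r hG) subr0 => <-.
rewrite (ipDr hH) (ipZr hH) (ipZl hH) conjCK.
by rewrite addrAC subrr add0r.
Qed.

Lemma denseK mu : rst mu ->
  dense ipG (fun x => exists g', Tt g' (mu *: g') /\ x = Gamt0 g').
Proof.
move=> rm p e e0; have dd := condDt0; have [a [[x [dx ->]] ha]] := dd p e e0.
have [g' [Tg' eg]] := decomp opTt linGt0 rm dx.
by exists (Gamt0 g'); split; [exists g' | rewrite eg].
Qed.


Lemma conjB (a b : R[i]) : (a - b)^* = a^* - b^*.
Proof. exact: rmorphB. Qed.

Lemma key' lam mu g g' : T g (lam *: g) -> Tt g' (mu *: g') ->
  ipG (Gamt0 g') (Gam1 g) = ipG (Gamt1 g') (Gam0 g) + (lam^* - mu) * ipH g' g.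
Proof. by move=> Tg Tg'; rewrite -(key Tg Tg') addrC subrK. Qed.

Lemma eq1 lam mu : rs lam -> rst mu ->
 op_eq (op_diff (weyl_fun T Gam0 Gam1 lam) (adjoint ipG ipG (weyl_fun Tt Gamt0 Gamt1 mu)))
   (op_scale (lam - mu^*) (op_comp (adjoint ipG ipH (gamma_field Tt Gamt0 mu))
      (gamma_field T Gam0 lam))).
Proof.
move=> rl rm h y; split.
- case=> y1 [y2 [[g [[Tg ->] [dg ->]]] [hy2 ->]]].
  have [z0 hz0] := adj_exists rm g.
  exists z0; split; first by exists g; split.
  apply/eqP; rewrite -subr_eq0; apply/eqP.
  apply: (orth_dense hG (denseK rm)) => x [g' [Tg' ->]].
  rewrite !(ipBr hG) (ipZr hG).
  have e2 : ipG (Gamt0 g') y2 = ipG (Gamt1 g') (Gam0 g).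
    by symmetry; apply: hy2; exists g'; split; split => //; exists (mu *: g').
  have e3 : ipG (Gamt0 g') z0 = ipH g' g by symmetry; apply: hz0; split.
  rewrite e2 e3 (key' Tg Tg') conjB conjCK; ring.
- case=> y' [[f [[Tf ->] hz]] ->].
  exists (Gam1 f), (Gam1 f - (lam - mu^*) *: y'); split.
    by exists f; split; split => //; exists (lam *: f).
  split; last by rewrite opprB addrCA subrr addr0.
  move=> x w [g' [[Tg' ->] [_ ->]]].
  rewrite (ipBr hG) (ipZr hG).
  have e3 : ipG (Gamt0 g') y' = ipH g' f by symmetry; apply: hz; split.
  rewrite e3 (key' Tf Tg') conjB conjCK; ring.
Qed.

Lemma part_iii lam0 lam : rs lam0 -> rst lam0 -> rs lam ->
 op_eq (weyl_fun T Gam0 Gam1 lam)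
  (op_sum (adjoint ipG ipG (weyl_fun Tt Gamt0 Gamt1 lam0))
     (op_comp (adjoint ipG ipH (gamma_field Tt Gamt0 lam0))
        (op_comp (op_scale (lam - lam0^*)
           (op_sum (@op_id H) (op_scale (lam - lam0) (resolvent (A0_of T Gam0) lam))))
           (gamma_field T Gam0 lam0)))).
Proof.
move=> r0 rt0 rl h k; split.
- case=> g [[Tg ->] [dg ->]].
  have [f [Tf ef]] := decomp opT linG0 r0 dg.
  have [_ [tot _]] := rl; have [r hr] := tot f.
  have [Tfl Gfl] := ker_shift opT linG0 Tf hr.
  have efl : f + (lam - lam0) *: r = g.
    by apply: (uniqK opT linG0 rl Tfl Tg); rewrite Gfl ef.
  have [y2 hy2] := adj_exists rt0 ((lam - lam0^*) *: g).
  exists (Gam1 g - y2), y2; split; last split; last by rewrite subrK.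
    move=> x w [g' [[Tg' ->] [_ ->]]].
    rewrite (ipBr hG).
    have e3 : ipG (Gamt0 g') y2 = ipH g' ((lam - lam0^*) *: g).
      by symmetry; apply: hy2; split.
    rewrite e3 (ipZr hH) (key' Tg Tg') conjB conjCK; ring.
  exists ((lam - lam0^*) *: g); split => //.
  exists f; split; first by split => //; rewrite ef.
  exists (f + (lam - lam0) *: r); split; last by rewrite efl.
  exists f, ((lam - lam0) *: r); split => //; split => //.
  by exists r.
- case=> y1 [y2 [hy1 [[v [[f [[Tf eh] [v1 [[a [b [-> [[r [hr ->]] ->]]]] ->]]]] hv]] ->]]].
  subst h.
  have [Tfl Gfl] := ker_shift opT linG0 Tf hr.
  exists (f + (lam - lam0) *: r); split; first by split => //; rewrite Gfl.
  split; first by exists (lam *: (f + (lam - lam0) *: r)).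
  apply/eqP; rewrite eq_sym -subr_eq0; apply/eqP.
  apply: (orth_dense hG (denseK rt0)) => x [g' [Tg' ->]].
  rewrite (ipBr hG) (ipDr hG).
  have e1 : ipG (Gamt0 g') y1 = ipG (Gamt1 g') (Gam0 f).
    by symmetry; apply: hy1; exists g'; split; split => //; exists (lam0 *: g').
  have e2 : ipG (Gamt0 g') y2 = ipH g' ((lam - lam0^*) *: (f + (lam - lam0) *: r)).
    by symmetry; apply: hv; split.
  rewrite e1 e2 (ipZr hH) (key' Tfl Tg') Gfl conjB conjCK; ring.
Qed.

End Main.

Unset Implicit Arguments.

Lemma op_neg (R : realType) (V W : lmodType R[i]) (A B X : op V W) (c : R[i]) :
  op_eq (op_diff A B) (op_scale c X) -> op_eq (op_diff B A) (op_scale (- c) X).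
Proof.
move=> e x y; split.
- case=> y1 [y2 [hB [hA ->]]].
  have : op_diff A B x (y2 - y1) by exists y2, y1.
  case/e => z [hz ez]; exists z; split => //.
  by rewrite scaleNr -ez opprB.
- case=> z [hz ->].
  have : op_scale c X x (c *: z) by exists z.
  case/e => y1 [y2 [hA [hB ey]]]; exists y2, y1; split => //; split => //.
  by rewrite scaleNr ey opprB.
Qed.

Theorem proposition3p4
  (R : realType)
  (H : lmodType R[i]) (ipH : H -> H -> R[i])
  (G : lmodType R[i]) (ipG : G -> G -> R[i])
  (hH : is_hilbert ipH) (sepH : separable ipH) (hG : is_hilbert ipG)
  (* the adjoint pair {S, S~} *)
  (S St : op H H)
  (opS : is_operator S) (clS : closed_op ipH ipH S) (ddS : densely_defined ipH S)
  (opSt : is_operator St) (clSt : closed_op ipH ipH St)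
  (ddSt : densely_defined ipH St)
  (adjpair : forall f Sf g Stg, S f Sf -> St g Stg -> ipH Sf g = ipH f Stg)
  (* the cores T of S^* and T~ of S~^* *)
  (T Tt : op H H) (opT : is_operator T) (opTt : is_operator Tt)
  (TS : op_le T (adjoint ipH ipH S)) (TtSt : op_le Tt (adjoint ipH ipH St))
  (coreT : op_eq (op_closure ipH ipH T) (adjoint ipH ipH S))
  (coreTt : op_eq (op_closure ipH ipH Tt) (adjoint ipH ipH St))
  (* the boundary maps *)
  (Gam0 Gam1 Gamt0 Gamt1 : H -> G)
  (linG0 : linear_on (dom T) Gam0) (linG1 : linear_on (dom T) Gam1)
  (linGt0 : linear_on (dom Tt) Gamt0) (linGt1 : linear_on (dom Tt) Gamt1)
  (* (G) *)
  (condG : forall f Tf g Ttg, T f Tf -> Tt g Ttg ->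
     ipH Tf g - ipH f Ttg = ipG (Gam1 f) (Gamt0 g) - ipG (Gam0 f) (Gamt1 g))
  (* (D) *)
  (condD0 : dense ipG (image_on (dom T) Gam0))
  (condDt0 : dense ipG (image_on (dom Tt) Gamt0))
  (* (M) *)
  (condM1 : op_eq (adjoint ipH ipH (A0_of T Gam0)) (A0_of Tt Gamt0))
  (condM2 : op_eq (adjoint ipH ipH (A0_of Tt Gamt0)) (A0_of T Gam0))
  (* rho(A0) nonempty *)
  (rho_ne : exists l, resolvent_set ipH (A0_of T Gam0) l) :
  (* (i) *)
  (forall lam, resolvent_set ipH (A0_of T Gam0) lam ->
     is_operator (weyl_fun T Gam0 Gam1 lam) /\
     (forall h, dom (weyl_fun T Gam0 Gam1 lam) h <-> image_on (dom T) Gam0 h) /\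
     dense ipG (dom (weyl_fun T Gam0 Gam1 lam)) /\
     (forall k, ran (weyl_fun T Gam0 Gam1 lam) k -> image_on (dom T) Gam1 k)) /\
  (forall mu, resolvent_set ipH (A0_of Tt Gamt0) mu ->
     is_operator (weyl_fun Tt Gamt0 Gamt1 mu) /\
     (forall h, dom (weyl_fun Tt Gamt0 Gamt1 mu) h <-> image_on (dom Tt) Gamt0 h) /\
     dense ipG (dom (weyl_fun Tt Gamt0 Gamt1 mu)) /\
     (forall k, ran (weyl_fun Tt Gamt0 Gamt1 mu) k -> image_on (dom Tt) Gamt1 k)) /\
  (* (ii) *)
  (forall lam, resolvent_set ipH (A0_of T Gam0) lam ->
     op_le (weyl_fun T Gam0 Gam1 lam)
           (adjoint ipG ipG (weyl_fun Tt Gamt0 Gamt1 lam^*)) /\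
     op_le (weyl_fun Tt Gamt0 Gamt1 lam^*)
           (adjoint ipG ipG (weyl_fun T Gam0 Gam1 lam))) /\
  (forall lam mu, resolvent_set ipH (A0_of T Gam0) lam ->
     resolvent_set ipH (A0_of Tt Gamt0) mu ->
     op_eq (op_diff (weyl_fun T Gam0 Gam1 lam)
                    (adjoint ipG ipG (weyl_fun Tt Gamt0 Gamt1 mu)))
           (op_scale (lam - mu^*)
              (op_comp (adjoint ipG ipH (gamma_field Tt Gamt0 mu))
                       (gamma_field T Gam0 lam))) /\
     op_eq (op_diff (adjoint ipG ipG (weyl_fun T Gam0 Gam1 lam))
                    (weyl_fun Tt Gamt0 Gamt1 mu))
           (op_scale (lam^* - mu)
              (op_comp (adjoint ipG ipH (gamma_field T Gam0 lam))
                       (gamma_field Tt Gamt0 mu)))) /\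
  (* (iii) *)
  (forall lam0 lam, resolvent_set ipH (A0_of T Gam0) lam0 ->
     resolvent_set ipH (A0_of Tt Gamt0) lam0 ->
     resolvent_set ipH (A0_of T Gam0) lam ->
     op_eq (weyl_fun T Gam0 Gam1 lam)
       (op_sum (adjoint ipG ipG (weyl_fun Tt Gamt0 Gamt1 lam0))
          (op_comp (adjoint ipG ipH (gamma_field Tt Gamt0 lam0))
             (op_comp
                (op_scale (lam - lam0^*)
                   (op_sum (@op_id H)
                      (op_scale (lam - lam0) (resolvent (A0_of T Gam0) lam))))
                (gamma_field T Gam0 lam0))))) /\
  (forall mu0 mu, resolvent_set ipH (A0_of T Gam0) mu0 ->
     resolvent_set ipH (A0_of Tt Gamt0) mu0 ->
     resolvent_set ipH (A0_of Tt Gamt0) mu ->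
     op_eq (weyl_fun Tt Gamt0 Gamt1 mu)
       (op_sum (adjoint ipG ipG (weyl_fun T Gam0 Gam1 mu0))
          (op_comp (adjoint ipG ipH (gamma_field T Gam0 mu0))
             (op_comp
                (op_scale (mu - mu0^*)
                   (op_sum (@op_id H)
                      (op_scale (mu - mu0) (resolvent (A0_of Tt Gamt0) mu))))
                (gamma_field Tt Gamt0 mu0))))).
Proof.
have condP : forall f Tf g Ttg, T f Tf -> Tt g Ttg ->
    ipH g Tf - ipH Ttg f = ipG (Gamt0 g) (Gam1 f) - ipG (Gamt1 g) (Gam0 f).
  move=> f Tf g Ttg h1 h2; have := condG _ _ _ _ h1 h2.
  move/(congr1 Num.conj); rewrite !conjB.
  by rewrite -!(ip_hermitian hH) -!(ip_hermitian hG).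
have condP' : forall f Tf g Ttg, Tt f Tf -> T g Ttg ->
    ipH g Tf - ipH Ttg f = ipG (Gam0 g) (Gamt1 f) - ipG (Gam1 g) (Gamt0 f).
  by move=> f Tf g Ttg h1 h2; rewrite -[LHS]opprB (condG _ _ _ _ h2 h1) opprB.
split; first by move=> lam rl; have X := part_i opT linG0 linG1 rl condD0; exact X.
split; first by move=> mu rm; have X := part_i opTt linGt0 linGt1 rm condDt0; exact X.
split.
  move=> lam _; split; first by have X := incl hH condP (lam := lam); exact X.
  by move: (incl hH condP' (lam := lam^*)); rewrite conjCK.
split.
  move=> lam mu rl rm; split.
    by have X := eq1 hH hG opTt linGt0 condP condDt0 condM2 rl rm; exact X.
  have := eq1 hH hG opT linG0 condP' condD0 condM1 rm rl.
  by move/op_neg; rewrite opprB.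
split.
  move=> lam0 lam r0 rt0 rl.
  by have X := part_iii hH hG opT opTt linG0 linGt0 condP condDt0 condM2 r0 rt0 rl; exact X.
move=> mu0 mu r0 rt0 rm.
by have X := part_iii hH hG opTt opT linGt0 linG0 condP' condD0 condM1 rt0 r0 rm; exact X.
Qed.
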